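(* Let $J:[0,1]\to[0,\infty)$ with $\int_{\mathbb{Z}_p}J(|x|_p)dx=1$ (extended by zero outside $\mathbb{Z}_p$) and $\boldsymbol{J}\varphi=J(|x|_p)\ast\varphi-\varphi$. For $l\ge1$ let $G_l=\mathbb{Z}_p/p^l\mathbb{Z}_p$ and let $\mathcal{D}_l(\mathbb{Z}_p)$ be the complex vector space spanned by $\{\Omega(p^l|x-I|_p)\}_{I\in G_l}$. Then $\boldsymbol{J}:\mathcal{D}_l(\mathbb{Z}_p)\to\mathcal{D}_l(\mathbb{Z}_p)$ is a well-defined operator, and, identifying $\varphi\in\mathcal{D}_l(\mathbb{Z}_p)$ with the column vector $[\varphi(I)]_{I\in G_l}$, the restriction of $\boldsymbol{J}$ to $\mathcal{D}_l(\mathbb{Z}_p)$ is given by the matrix $\boldsymbol{J}^{(l)}=[J^{(l)}_{I,K}]_{I,K\in G_l}$ with $J^{(l)}_{I,K}=p^{-l}J(|I-K|_p)$ if $I\neq K$, and $J^{(l)}_{I,I}=\int_{p^l\mathbb{Z}_p}J(|y|_p)dy-1$.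
   Context: $p$ is a fixed prime; Haar measure with $\int_{\mathbb{Z}_p}dx=1$. Elements of $G_l$ are represented by $p$-adic integers $I=I_0+I_1p+\dots+I_{l-1}p^{l-1}$, $I_j\in\{0,\dots,p-1\}$, and $\Omega(p^l|x-I|_p)$ is the characteristic function of the ball $I+p^l\mathbb{Z}_p$. *)

(* Defs.v *)
From HB Require Import structures.
From mathcomp Require Import all_boot all_order all_algebra.
From mathcomp Require Import all_classical all_reals all_analysis.
From mathcomp Require Import complex.
Set Implicit Arguments. Unset Strict Implicit. Unset Printing Implicit Defensive.
Import Order.TTheory GRing.Theory Num.Theory.
Local Open Scope classical_set_scope.
Local Open Scope ring_scope.
Local Open Scope complex_scope.

(* p-adic digits {0,...,p-1}; for p prime, p.-1.+1 = p. *)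
Definition digit (p : nat) : Type := 'I_p.-1.+1.

(* Z_p as the space of digit expansions x = x_0 + x_1 p + x_2 p^2 + ... *)
Definition Zpadic (p : nat) : Type := nat -> digit p.
HB.instance Definition _ p := Choice.on (Zpadic p).
HB.instance Definition _ p := isPointed.Build (Zpadic p) (fun _ => ord0).

Definition Zp0 (p : nat) : Zpadic p := fun _ => ord0.

Definition congr_upto (p : nat) (x y : Zpadic p) (n : nat) : Prop :=
  forall j, (j < n)%N -> x j = y j.

(* |x - y|_p = p^{-ord(x-y)}, ord(x-y) = sup {n | x = y mod p^n};
   written as inf {p^{-n} | x = y mod p^n} (equals 0 iff x = y). *)
Definition padic_absdiff (R : realType) (p : nat) (x y : Zpadic p) : R :=
  inf [set (p%:R ^- n : R) | n in [set n | congr_upto x y n]].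

Definition padic_abs (R : realType) (p : nat) (x : Zpadic p) : R :=
  padic_absdiff R x (Zp0 p).

(* G_l = Z_p / p^l Z_p, elements I = I_0 + I_1 p + ... + I_{l-1} p^{l-1} *)
Definition G (p l : nat) := {ffun 'I_l -> digit p}.

Definition emb (p l : nat) (I : G p l) : Zpadic p :=
  fun j => match @insub nat (fun j => (j < l)%N) 'I_l j with
           | Some k => I k | None => ord0 end.

(* the ball I + p^l Z_p ; Omega(p^l |x - I|_p) is its indicator *)
Definition ballG (p l : nat) (I : G p l) : set (Zpadic p) :=
  [set x | forall j : 'I_l, x j = I j].

Definition G0 (p l : nat) : G p l := [ffun => ord0].

Definition Zp_balls (p : nat) : set (set (Zpadic p)) :=
  [set B | exists l (I : G p l), B = ballG I].

(* Z_p with the Borel sigma-algebra (generated by the Zp_balls) *)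
Definition ZpM (p : nat) := g_sigma_algebraType (@Zp_balls p).

Definition is_haar (R : realType) (p : nat)
  (mu : {measure set (ZpM p) -> \bar R}) : Prop :=
  forall l (I : G p l), mu (ballG I) = ((p%:R ^- l : R)%:E).

Definition Jconv (R : realType) (p : nat) (mu : {measure set (ZpM p) -> \bar R})
  (J : R -> R) (phi : Zpadic p -> R[i]) (x : Zpadic p) : R[i] :=
  Complex (Rintegral mu setT (fun y : ZpM p => J (padic_absdiff R x y) * complex.Re (phi y)))
          (Rintegral mu setT (fun y : ZpM p => J (padic_absdiff R x y) * complex.Im (phi y))).

Definition Jop (R : realType) (p : nat) (mu : {measure set (ZpM p) -> \bar R})
  (J : R -> R) (phi : Zpadic p -> R[i]) : Zpadic p -> R[i] :=
  fun x => Jconv mu J phi x - phi x.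

Definition inD (R : realType) (p l : nat) (phi : Zpadic p -> R[i]) : Prop :=
  exists c : G p l -> R[i],
    forall x, phi x = \sum_(I : G p l) c I * (\1_(ballG I) x : R)%:C.

Definition Jmat (R : realType) (p : nat) (mu : {measure set (ZpM p) -> \bar R})
  (J : R -> R) (l : nat) (I K : G p l) : R :=
  if I == K then Rintegral mu (ballG (G0 p l) : set (ZpM p))
                   (fun y => J (padic_abs R y)) - 1
  else p%:R ^- l * J (padic_absdiff R (emb I) (emb K)).

(* Main.v *)
Require Import Defs.
From HB Require Import structures.
From mathcomp Require Import all_boot all_order all_algebra.
From mathcomp Require Import all_classical all_reals all_analysis.
From mathcomp Require Import complex.
From mathcomp Require Import measurable_realfun.
Import Order.TTheory GRing.Theory Num.Theory.
Local Open Scope classical_set_scope.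
Local Open Scope ring_scope.
Local Open Scope complex_scope.
Set Implicit Arguments. Unset Strict Implicit. Unset Printing Implicit Defensive.


Section S.
Variable p : nat.

Definition Bx (x : Zpadic p) (m : nat) : set (ZpM p) := [set y | congr_upto x y m].
Definition trunc (x : Zpadic p) (m : nat) : G p m := [ffun j : 'I_m => x j].

Lemma Bx_ball (x : Zpadic p) m : Bx x m = ballG (trunc x m).
Proof.
rewrite /Bx /ballG /trunc; apply/seteqP; split => y /=.
  by move=> H j; rewrite ffunE H.
by move=> H j jm; have := H (Ordinal jm); rewrite ffunE => ->.
Qed.

Lemma ballG_meas l (I : G p l) : measurable (ballG I : set (ZpM p)).
Proof. apply: sub_sigma_algebra; by exists l, I. Qed.

Lemma Bx_meas (x : Zpadic p) m : measurable (Bx x m).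
Proof. rewrite Bx_ball; exact: ballG_meas. Qed.

Lemma congr_sym (x y : Zpadic p) n : congr_upto x y n <-> congr_upto y x n.
Proof. by split => H j jn; rewrite H. Qed.

Lemma absdiff_sym (R : realType) (x y : Zpadic p) : padic_absdiff R x y = padic_absdiff R y x.
Proof.
rewrite /padic_absdiff; congr inf; apply/seteqP; split => r [n /= H <-]; exists n => //;
 exact/congr_sym.
Qed.

Lemma absdiff_ext (R : realType) (x y x' y' : Zpadic p) :
  (forall n, congr_upto x y n <-> congr_upto x' y' n) ->
  padic_absdiff R x y = padic_absdiff R x' y'.
Proof.
move=> H; rewrite /padic_absdiff; congr inf; apply/seteqP; split => r [n /= Hn <-]; exists n => //;
 exact/H.
Qed.


Definition Shell (x : Zpadic p) n : set (ZpM p) := Bx x n `\` Bx x n.+1.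

Lemma congr_mono (x y : Zpadic p) a b : (a <= b)%N -> congr_upto x y b -> congr_upto x y a.
Proof. move=> ab H j ja; apply: H; exact: leq_trans ja ab. Qed.

Lemma classify (x y : Zpadic p) : y = x \/ exists n, Shell x n y.
Proof.
case: (pselect (exists j, x j != y j)) => [ex|nex]; last first.
  left; apply/funext => j; apply/eqP; rewrite eq_sym; apply/negP => /negP H.
  by apply: nex; exists j.
have exb : exists j, (fun j => x j != y j) j by [].
right; case: (ex_minnP exb) => j Hj Hmin; exists j; split.
  move=> i ij; apply/eqP; apply/negP => /negP Hi.
  by have := Hmin _ Hi; rewrite leqNgt ij.
move=> H; have := H j (ltnSn j); by move/eqP: Hj.
Qed.

Lemma shell_congr (x y : Zpadic p) n : Shell x n y ->
  forall k, congr_upto x y k <-> (k <= n)%N.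
Proof.
move=> [H1 H2] k; split => H.
  rewrite leqNgt; apply/negP => nk; apply: H2; exact: congr_mono H.
exact: congr_mono H1.
Qed.

Lemma shell_uniq (x y : Zpadic p) a b : Shell x a y -> Shell x b y -> a = b.
Proof.
move=> Ha Hb; apply/eqP; rewrite eqn_leq.
by rewrite ((shell_congr Hb a).1 Ha.1) ((shell_congr Ha b).1 Hb.1).
Qed.

Lemma shell_notx (x : Zpadic p) n : ~ Shell x n x.
Proof. by move=> [_ H]; apply: H. Qed.

Variable R : realType.

Definition cval n : R := inf [set (p%:R ^- k : R) | k in [set k | (k <= n)%N]].
Definition cinf : R := inf [set (p%:R ^- k : R) | k in [set: nat]].

Lemma absdiff_shell (x y : Zpadic p) n : Shell x n y -> padic_absdiff R x y = cval n.
Proof.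
move=> H; rewrite /padic_absdiff /cval; congr inf; apply/seteqP; split => r [k /= Hk <-]; exists k => //;
 exact/(shell_congr H).
Qed.

Lemma absdiff_xx (x : Zpadic p) : padic_absdiff R x x = cinf.
Proof.
rewrite /padic_absdiff /cinf; congr inf; apply/seteqP; split => r [k /= Hk <-]; exists k => //.
Qed.

Lemma absdiff_01 (x y : Zpadic p) : 0 <= padic_absdiff R x y <= 1.
Proof.
have hp0 : forall k, 0 <= (p%:R ^- k : R) by move=> k; rewrite invr_ge0 exprn_ge0.
have ne : [set (p%:R ^- k : R) | k in [set k | congr_upto x y k]] !=set0.
  by exists (p%:R ^- 0); exists 0%N.
apply/andP; split.
  apply: lb_le_inf => //; by move=> r [k _ <-].
have lb : has_lbound [set (p%:R ^- k : R) | k in [set k | congr_upto x y k]].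
  by exists 0 => r [k _ <-].
rewrite /padic_absdiff; apply: (ge_inf lb); exists 0%N => //; by rewrite expr0 invr1.
Qed.

End S.

Local Close Scope complex_scope.


Section M.
Variables (R : realType) (p : nat) (hp : prime p) (mu : {measure set (ZpM p) -> \bar R}).
Hypothesis Hmu : is_haar mu.
Variable J : R -> R.
Hypothesis HJ : forall r : R, 0 <= r <= 1 -> 0 <= J r.
Hypothesis HJ1 : (\int[mu]_x (J (padic_abs R x))%:E = 1%:E)%E.

Definition fJ (x : Zpadic p) : ZpM p -> \bar R := fun y => (J (padic_absdiff R x y))%:E.

Lemma fJ_ge0 x y : (0 <= fJ x y)%E.
Proof. by rewrite lee_fin; apply: HJ; apply: absdiff_01. Qed.

Definition Fm (x : Zpadic p) m k : set (ZpM p) :=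
  if k is k'.+1 then Shell x (m + k') else [set x].
Definition vm m k : \bar R :=
  if k is k'.+1 then (J (cval p R (m + k')))%:E else (J (cinf p R))%:E.

Lemma fJ_Fm x m k y : Fm x m k y -> fJ x y = vm m k.
Proof.
case: k => [|k] /= H; rewrite /fJ.
  by rewrite H (absdiff_xx R).
by rewrite (absdiff_shell R H).
Qed.

Lemma Bx_cover x m : Bx x m = \bigcup_k Fm x m k.
Proof.
apply/seteqP; split => y.
  move=> Hy; case: (classify x y) => [->|[n Hn]]; first by exists 0%N.
  have mn : (m <= n)%N by apply/(shell_congr Hn).
  exists (n - m).+1 => //=; by rewrite subnKC.
move=> [[|k] _ /= H]; first by rewrite H => j.
by apply: (congr_mono (leq_addr k m)); case: H.
Qed.

Lemma preimage_cover x (Y : set (\bar R)) :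
  fJ x @^-1` Y = \bigcup_(k in [set k | Y (vm 0 k)]) Fm x 0 k.
Proof.
apply/seteqP; split => y.
  move=> Hy; have : Bx x 0 y by [].
  rewrite Bx_cover => -[k _ Hk]; exists k => //=; by rewrite -(fJ_Fm Hk).
by move=> [k /= Hk H]; rewrite /preimage /= (fJ_Fm H).
Qed.

Lemma Fm_meas x m k : measurable (Fm x m k).
Proof.
case: k => [|k] /=; last by apply: measurableD; apply: Bx_meas.
have -> : [set x] = \bigcap_n Bx x n.
  apply/seteqP; split => y.
    by move=> -> n _ j _.
  move=> H; apply/funext => j; symmetry; exact: (H j.+1 I j (ltnSn j)).
by apply: bigcapT_measurable => n; apply: Bx_meas.
Qed.

Lemma fJ_meas (x : Zpadic p) (D : set (ZpM p)) : measurable_fun D (fJ x).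
Proof.
move=> mD Y mY; apply: measurableI => //; rewrite preimage_cover.
by apply: bigcup_measurable => k _; exact: Fm_meas.
Qed.

Lemma Fm_triv x m : trivIset setT (Fm x m).
Proof.
move=> [|i] [|j] _ _ [y [Hi Hj]] //=.
- by exfalso; move: Hi Hj => /= Hi Hj; rewrite Hi in Hj; exact: (shell_notx Hj).
- by exfalso; move: Hi Hj => /= Hi Hj; rewrite Hj in Hi; exact: (shell_notx Hi).
- by have /eqP := shell_uniq Hi Hj; rewrite eqn_add2l => /eqP ->.
Qed.


Lemma p_gt1 : (1 < p)%N. Proof. exact: prime_gt1. Qed.

Lemma mu_Bx x m : mu (Bx x m) = (p%:R ^- m)%:E.
Proof. by rewrite Bx_ball Hmu. Qed.

Definition wm m k : \bar R :=
  if k is k'.+1 then (p%:R ^- (m + k') - p%:R ^- (m + k').+1)%:E else 0%E.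

Lemma mu_single x : mu [set x] = 0%E.
Proof.
have mx : measurable [set x] by apply: (Fm_meas x 0 0).
have le n : (mu [set x] <= (p%:R ^- n)%:E)%E.
  rewrite -(mu_Bx x n); apply: le_measure; rewrite ?inE //; first exact: Bx_meas.
  by move=> y -> j.
have ge : (0 <= mu [set x])%E by apply: measure_ge0.
have fin : mu [set x] \is a fin_num.
  rewrite ge0_fin_numE //; apply: (le_lt_trans (le 0%N)); exact: ltry.
rewrite -(fineK fin); congr EFin.
set e := fine (mu [set x]).
have e0 : 0 <= e by rewrite fine_ge0.
have len : forall n, e <= p%:R ^- n by move=> n; rewrite -lee_fin fineK.
apply/eqP; rewrite eq_le e0 andbT; rewrite leNgt; apply/negP => epos.
set n := Num.bound e^-1.
have h1 : e^-1 < n%:R by apply: archi_boundP; rewrite invr_ge0.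
have h2 : (n%:R : R) < p%:R ^+ n by rewrite -natrX ltr_nat ltn_expl // p_gt1.
have h3 : e^-1 < p%:R ^+ n := lt_trans h1 h2.
have := len n; rewrite leNgt => /negP; apply.
rewrite -[e]invrK ltf_pV2 //; rewrite ?posrE ?invr_gt0 //.
by rewrite exprn_gt0 // ltr0n prime_gt0.
Qed.

Lemma mu_Fm x m k : mu (Fm x m k) = wm m k.
Proof.
case: k => [|k] /=; first exact: mu_single.
have H := mu_Bx x (m + k); have H' := mu_Bx x (m + k).+1.
have fin : (mu (Bx x (m + k)) < +oo)%E by rewrite H ltry.
transitivity ((mu (Bx x (m + k)) - mu (Bx x (m + k).+1))%E); last by rewrite H H' EFinB.
rewrite /Shell measureD; [|exact: Bx_meas|exact: Bx_meas|exact: fin].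
rewrite setIidr //; by move=> y; apply: congr_mono; exact: leqnSn.
Qed.

Lemma int_Fm x m k : (\int[mu]_(y in Fm x m k) fJ x y = vm m k * wm m k)%E.
Proof.
rewrite (eq_integral (cst (vm m k))); last by move=> y; rewrite inE => Hy; exact: fJ_Fm.
by rewrite integral_cst ?mu_Fm //; exact: Fm_meas.
Qed.

Lemma int_Bx x m : (\int[mu]_(y in Bx x m) fJ x y = \sum_(k <oo) (vm m k * wm m k))%E.
Proof.
rewrite Bx_cover ge0_integral_bigcup //=.
- by apply: eq_eseriesr => k _; exact: int_Fm.
- exact: Fm_meas.
- exact: fJ_meas.
- by move=> y _; exact: fJ_ge0.
- exact: Fm_triv.
Qed.


Lemma int_indep x x' m :
  (\int[mu]_(y in Bx x m) fJ x y = \int[mu]_(y in Bx x' m) fJ x' y)%E.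
Proof. by rewrite !int_Bx. Qed.

Lemma Bx0 (x : Zpadic p) : Bx x 0 = setT.
Proof. by apply/seteqP; split => y // _ j. Qed.

Lemma intT x : (\int[mu]_(y in setT) fJ x y = 1)%E.
Proof.
rewrite -(Bx0 x) (int_indep x (Defs.Zp0 p)) Bx0 -HJ1.
apply: eq_integral => y _; by rewrite /fJ /padic_abs absdiff_sym.
Qed.

Lemma fJ_int x : mu.-integrable setT (fJ x).
Proof.
apply/integrableP; split; first exact: fJ_meas.
rewrite (eq_integral (fJ x)); first by rewrite intT ltry.
by move=> y _; rewrite gee0_abs //; exact: fJ_ge0.
Qed.

Lemma int_fin x (A : set (ZpM p)) : measurable A ->
  (\int[mu]_(y in A) fJ x y)%E \is a fin_num.
Proof.
move=> mA; rewrite ge0_fin_numE; last by apply: integral_ge0 => y _; exact: fJ_ge0.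
apply: (@le_lt_trans _ _ (\int[mu]_(y in setT) fJ x y)%E).
  apply: ge0_subset_integral => //; [exact: fJ_meas | move=> y _; exact: fJ_ge0].
by rewrite intT ltry.
Qed.

Definition hK x l (K : G p l) := (fJ x) \_ (ballG K : set (ZpM p)).

Lemma hK_int x l (K : G p l) : mu.-integrable setT (hK x K).
Proof.
apply: le_integrable (fJ_int x) => //.
  by rewrite /hK; apply/(measurable_restrictT _ (ballG_meas K)); exact: fJ_meas.
move=> y _; rewrite /hK patchE; case: ifP => _ //.
by rewrite abse0 abse_ge0.
Qed.

Lemma Rint_lin x l (r : G p l -> R) :
  Rintegral mu setT (fun y => J (padic_absdiff R x y) * \sum_(K : G p l) r K * (\1_(ballG K) y : R))
  = \sum_(K : G p l) r K * fine (\int[mu]_(y in (ballG K : set (ZpM p))) fJ x y)%E.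
Proof.
rewrite /Rintegral.
rewrite (@eq_integral _ _ _ mu setT (fun y => \sum_(K : G p l) (r K)%:E * hK x K y)%E); last first.
  move=> y _; rewrite mulr_sumr -sumEFin; apply: eq_bigr => K _.
  rewrite /hK patchE indicE; case: ifP => _.
    by rewrite mulr1 mulrC EFinM.
  by rewrite mulr0 mulr0 mule0.
rewrite integral_sum //; last by move=> K; apply: integrableZl => //; exact: hK_int.
have -> : (\sum_(K : G p l) \int[mu]_(y in setT) ((r K)%:E * hK x K y))%E =
   (\sum_(K : G p l) (r K * fine (\int[mu]_(y in (ballG K : set (ZpM p))) fJ x y)%E)%:E)%E.
  apply: eq_bigr => K _; rewrite integralZl //; last exact: hK_int.
  rewrite /hK -integral_mkcond EFinM fineK //.
  apply: int_fin; exact: ballG_meas.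
by rewrite sumEFin.
Qed.

End M.

Local Open Scope complex_scope.


Section C.
Variable R : realType.

Lemma ReD (a b : R[i]) : complex.Re (a + b) = complex.Re a + complex.Re b. Proof. by case: a; case: b. Qed.
Lemma ImD (a b : R[i]) : complex.Im (a + b) = complex.Im a + complex.Im b. Proof. by case: a; case: b. Qed.
Lemma Re_sum (I : finType) (F : I -> R[i]) : complex.Re (\sum_i F i) = \sum_i complex.Re (F i).
Proof. by apply: (big_morph _ ReD). Qed.
Lemma Im_sum (I : finType) (F : I -> R[i]) : complex.Im (\sum_i F i) = \sum_i complex.Im (F i).
Proof. by apply: (big_morph _ ImD). Qed.
Lemma ReMr (c : R[i]) (t : R) : complex.Re (c * t%:C) = complex.Re c * t.
Proof. by case: c => a b /=; rewrite mulr0 subr0. Qed.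
Lemma ImMr (c : R[i]) (t : R) : complex.Im (c * t%:C) = complex.Im c * t.
Proof. by case: c => a b /=; rewrite mulr0 add0r. Qed.
Lemma ReMl (c : R[i]) (t : R) : complex.Re (t%:C * c) = complex.Re c * t.
Proof. by rewrite mulrC ReMr. Qed.
Lemma ImMl (c : R[i]) (t : R) : complex.Im (t%:C * c) = complex.Im c * t.
Proof. by rewrite mulrC ImMr. Qed.

Lemma cplx_sum (I : finType) (f : I -> R) (c : I -> R[i]) :
  Complex (\sum_K complex.Re (c K) * f K) (\sum_K complex.Im (c K) * f K) = \sum_K (f K)%:C * c K.
Proof.
set z := (\sum_K (f K)%:C * c K : R[i]); have -> : z = Complex (complex.Re z) (complex.Im z) by case: z.
rewrite /z Re_sum Im_sum; congr Complex; apply: eq_bigr => K _.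
  by rewrite ReMl. by rewrite ImMl.
Qed.
End C.

Section B.
Variables (p l : nat).

Lemma emb_val (I : G p l) (j : 'I_l) : emb I j = I j.
Proof. by rewrite /emb valK. Qed.

Lemma emb_ball (I : G p l) : ballG I (emb I).
Proof. by move=> j; rewrite emb_val. Qed.

Lemma ball_uniq (x : Zpadic p) (I K : G p l) : ballG I x -> ballG K x -> I = K.
Proof. by move=> HI HK; apply/ffunP => j; rewrite -HI -HK. Qed.

Lemma ball_trunc (x : Zpadic p) : ballG (trunc x l) x.
Proof. by move=> j; rewrite ffunE. Qed.

Lemma Bx_ballG (x : Zpadic p) (I : G p l) : ballG I x -> Bx x l = ballG I.
Proof. by move=> H; rewrite Bx_ball (ball_uniq (ball_trunc x) H). Qed.

Lemma congr_off (I K : G p l) (u v u' v' : Zpadic p) : I <> K ->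
  ballG I u -> ballG K v -> ballG I u' -> ballG K v' ->
  forall n, congr_upto u v n -> congr_upto u' v' n.
Proof.
move=> IK Hu Hv Hu' Hv' n H.
have [j0 Hj0] : exists j0, I j0 != K j0.
  apply: contrapT => Hn; apply: IK; apply/ffunP => j; apply/eqP.
  by apply: contrapT => /negP Hj; apply: Hn; exists j.
have nl : (n <= l)%N.
  rewrite leqNgt; apply/negP => ln.
  have := H j0 (ltn_trans (ltn_ord j0) ln); rewrite Hu Hv => E.
  by rewrite E eqxx in Hj0.
move=> j jn; have jl : (j < l)%N by exact: leq_trans jn nl.
have := H j jn.
by rewrite (Hu (Ordinal jl)) (Hv (Ordinal jl)) (Hu' (Ordinal jl)) (Hv' (Ordinal jl)).
Qed.

Lemma absdiff_off (R : realType) (I K : G p l) (u v : Zpadic p) : I <> K ->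
  ballG I u -> ballG K v ->
  padic_absdiff R u v = padic_absdiff R (emb I) (emb K).
Proof.
move=> IK Hu Hv; apply: absdiff_ext => n; split.
  exact: (congr_off IK Hu Hv (emb_ball I) (emb_ball K)).
exact: (congr_off IK (emb_ball I) (emb_ball K) Hu Hv).
Qed.

Lemma sum_ball (R : realType) (d : G p l -> R[i]) (x : Zpadic p) (I : G p l) :
  ballG I x -> \sum_K d K * (\1_(ballG K) x : R)%:C = d I.
Proof.
move=> HI; rewrite (bigD1 I) //= big1 ?addr0.
  by rewrite indicE mem_set // rmorph1 mulr1.
move=> K KI; rewrite indicE memNset ?rmorph0 ?mulr0 //.
by move=> HK; move/eqP: KI; apply; exact: (ball_uniq HK HI).
Qed.

End B.


Section Main.
Variables (R : realType) (p : nat) (hp : prime p) (mu : {measure set (ZpM p) -> \bar R}).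
Hypothesis Hmu : is_haar mu.
Variable J : R -> R.
Hypothesis HJ : forall r : R, 0 <= r <= 1 -> 0 <= J r.
Hypothesis HJ1 : (\int[mu]_x (J (padic_abs R x))%:E = 1%:E)%E.
Variable l : nat.

Definition aI (I K : G p l) : R :=
  if I == K then Rintegral mu (ballG (G0 p l) : set (ZpM p)) (fun y => J (padic_abs R y))
  else p%:R ^- l * J (padic_absdiff R (emb I) (emb K)).

Lemma Jmat_aI I K : Jmat mu J I K = aI I K - (I == K)%:R.
Proof. by rewrite /Jmat /aI; case: eqP => _; rewrite ?subr0. Qed.

Lemma G0_ball : ballG (G0 p l) (Defs.Zp0 p).
Proof. by move=> j; rewrite ffunE. Qed.

Lemma intK_val (x : Zpadic p) (I K : G p l) : ballG I x ->
  fine (\int[mu]_(y in (ballG K : set (ZpM p))) fJ J x y)%E = aI I K.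
Proof.
move=> HI; rewrite /aI; case: eqP => [<-|IK].
  rewrite -(Bx_ballG HI) (int_indep hp Hmu HJ x (Defs.Zp0 p)) (Bx_ballG G0_ball) /Rintegral.
  congr fine; apply: eq_integral => y _; by rewrite /fJ /padic_abs absdiff_sym.
rewrite (eq_integral (cst (J (padic_absdiff R (emb I) (emb K)))%:E)); last first.
  move=> y; rewrite inE => Hy; rewrite /fJ /=.
  by rewrite (absdiff_off R IK HI Hy).
rewrite integral_cst; last exact: ballG_meas.
by rewrite Hmu /= mulrC.
Qed.

Variable phi : Zpadic p -> R[i].
Variable c : G p l -> R[i].
Hypothesis Hc : forall x, phi x = \sum_(I : G p l) c I * (\1_(ballG I) x : R)%:C.

Lemma phi_ball x I : ballG I x -> phi x = c I.
Proof. by move=> H; rewrite Hc (sum_ball c H). Qed.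

Lemma Jconv_val x I : ballG I x ->
  Jconv mu J phi x = \sum_K (aI I K)%:C * c K.
Proof.
move=> HI.
have eRe : (fun y : ZpM p => J (padic_absdiff R x y) * complex.Re (phi y)) =
   (fun y => J (padic_absdiff R x y) * \sum_(K : G p l) complex.Re (c K) * (\1_(ballG K) y : R)).
  apply/funext => y; rewrite Hc Re_sum; congr (_ * _); apply: eq_bigr => K _; by case: (c K) => a b /=; rewrite mulr0 subr0.
have eIm : (fun y : ZpM p => J (padic_absdiff R x y) * complex.Im (phi y)) =
   (fun y => J (padic_absdiff R x y) * \sum_(K : G p l) complex.Im (c K) * (\1_(ballG K) y : R)).
  apply/funext => y; rewrite Hc Im_sum; congr (_ * _); apply: eq_bigr => K _; by case: (c K) => a b /=; rewrite mulr0 add0r.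
rewrite /Jconv eRe eIm !(Rint_lin hp Hmu HJ HJ1).
rewrite -cplx_sum; congr Complex; apply: eq_bigr => K _; by rewrite (intK_val K HI).
Qed.

Lemma Jop_val x I : ballG I x ->
  Jop mu J phi x = \sum_K (aI I K)%:C * c K - c I.
Proof. by move=> HI; rewrite /Jop (Jconv_val HI) (phi_ball HI). Qed.

End Main.

Unset Implicit Arguments.
Theorem lemma9 (R : realType) (p : nat) (hp : prime p)
  (mu : {measure set (ZpM p) -> \bar R}) (Hmu : is_haar mu)
  (J : R -> R) (HJ : forall r : R, 0 <= r <= 1 -> 0 <= J r)
  (HJ1 : (\int[mu]_x (J (padic_abs R x))%:E = 1%:E)%E)
  (l : nat) (hl : (1 <= l)%N) :
  (forall phi : Zpadic p -> R[i], inD l phi -> inD l (Jop mu J phi)) /\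
  (forall phi : Zpadic p -> R[i], inD l phi ->
     forall I : G p l,
       Jop mu J phi (emb I) = \sum_(K : G p l) (Jmat mu J I K)%:C * phi (emb K)).
Proof.
split.
  move=> phi [c Hc].
  exists (fun I => \sum_K (aI mu J I K)%:C * c K - c I) => x.
  rewrite (Jop_val hp Hmu HJ HJ1 Hc (@ball_trunc p l x)).
  by rewrite (sum_ball _ (@ball_trunc p l x)).
move=> phi [c Hc] I.
rewrite (Jop_val hp Hmu HJ HJ1 Hc (emb_ball I)).
transitivity (\sum_K ((aI mu J I K)%:C * c K - ((I == K)%:R)%:C * c K)); last first.
  apply: eq_bigr => K _; by rewrite (phi_ball Hc (emb_ball K)) Jmat_aI rmorphB mulrBl.
rewrite sumrB; congr (_ - _).
rewrite (bigD1 I) //= eqxx rmorph1 mul1r big1 ?addr0 //.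
move=> K KI; by rewrite eq_sym (negbTE KI) rmorph0 mul0r.
Qed.
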